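(* For integers $n\ge2$ let $P_n$ denote the Legendre polynomials and define $$\tilde P_n(z)=\frac1{n+2}\Big(nP_n(z)-\frac2{n-1}P_{n-1}'(z)\Big).$$ Then $\tilde P_n=\partial_z G_n$ where $G_n$ solves $\big((1-z^2)G_{n,z}\big)_{,z}=(z^2-1)P_n'(z)$, and the polynomials $\tilde P_n$ are orthogonal on $[-1,1]$: $$\int_{-1}^1\tilde P_k(z)\tilde P_n(z)\,dz=\frac{2n(n+1)}{(n-1)(n+2)(2n+1)}\,\delta_{kn},\qquad k,n\ge2 .$$ *)

(* Defs.v *)
From HB Require Import structures.
From mathcomp Require Import all_boot all_order all_algebra.
Set Implicit Arguments. Unset Strict Implicit. Unset Printing Implicit Defensive.
Import Order.TTheory GRing.Theory Num.Theory.
Local Open Scope ring_scope.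

Definition legendre (R : fieldType) (n : nat) : {poly R} :=
  ((2 ^ n * n`!)%N%:R)^-1 *: (('X^2 - 1) ^+ n)^`(n).

Definition legendre_tilde (R : fieldType) (n : nat) : {poly R} :=
  (n.+2%:R)^-1 *: (n%:R *: legendre R n
                   - (2 / (n.-1)%:R) *: (legendre R n.-1)^`()).

(* Formal antiderivative of a polynomial (vanishing at 0):
   sum_j p_j X^(j+1)/(j+1). *)
Definition poly_prim (R : fieldType) (p : {poly R}) : {poly R} :=
  \poly_(i < (size p).+1) (if i is j.+1 then p`_j / j.+1%:R else 0).

Definition poly_integral (R : fieldType) (a b : R) (p : {poly R}) : R :=
  (poly_prim p).[b] - (poly_prim p).[a].

(* Main.v *)
Require Import Defs.
From HB Require Import structures.
From mathcomp Require Import all_boot all_order all_algebra.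
From mathcomp Require Import ring lra zify.
Import Order.TTheory GRing.Theory Num.Theory.
Local Open Scope ring_scope.

Section Integ.
Variable R : realFieldType.
Implicit Types p q F : {poly R}.

Lemma prim_deriv p : (poly_prim p)^`() = p.
Proof.
apply/polyP=> i; rewrite coef_deriv coef_poly ltnS.
case: ifP => Hi.
- by rewrite -[_ *+ _]mulr_natr divfK // pnatr_eq0.
- by rewrite mul0rn nth_default // leqNgt Hi.
Qed.

Lemma deriv_eq0 q : q^`() = 0 -> q = (q`_0)%:P.
Proof.
move=> H; apply/polyP=> [[|i]]; rewrite coefC //=.
have := congr1 (fun r : {poly R} => r`_i) H; rewrite coef_deriv coef0 => /eqP.
by rewrite mulrn_eq0 /= => /eqP.
Qed.

Lemma integ_FTC a b p F : F^`() = p -> poly_integral a b p = F.[b] - F.[a].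
Proof.
move=> HF; rewrite /poly_integral.
have E := deriv_eq0 (poly_prim p - F).
rewrite derivB prim_deriv HF subrr in E.
have -> : poly_prim p = F + ((poly_prim p - F)`_0)%:P by rewrite -(E erefl) addrC subrK.
rewrite !hornerE; ring.
Qed.

Lemma integD a b p q : poly_integral a b (p + q) = poly_integral a b p + poly_integral a b q.
Proof.
rewrite (@integ_FTC a b _ (poly_prim p + poly_prim q)); last by rewrite derivD !prim_deriv.
rewrite /poly_integral !hornerD; ring.
Qed.

Lemma integZ a b c p : poly_integral a b (c *: p) = c * poly_integral a b p.
Proof.
rewrite (@integ_FTC a b _ (c *: poly_prim p)); last by rewrite derivZ !prim_deriv.
rewrite /poly_integral ?hornerD ?hornerN ?hornerZ; ring.
Qed.

Lemma integN a b p : poly_integral a b (- p) = - poly_integral a b p.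
Proof. by rewrite -scaleN1r integZ mulN1r. Qed.

Lemma integB a b p q : poly_integral a b (p - q) = poly_integral a b p - poly_integral a b q.
Proof. by rewrite integD integN. Qed.

Lemma integ_parts a b p q : poly_integral a b (p^`() * q)
  = (p*q).[b] - (p*q).[a] - poly_integral a b (p * q^`()).
Proof.
rewrite (@integ_FTC a b _ (p * q - poly_prim (p * q^`()))); last first.
  by rewrite derivB derivM prim_deriv addrK.
rewrite /poly_integral ?hornerD ?hornerN ?hornerZ; ring.
Qed.

Lemma integ1 : poly_integral (-1) 1 (1 : {poly R}) = 2.
Proof.
rewrite (@integ_FTC _ _ _ 'X); last by rewrite derivX.
rewrite !hornerE; ring.
Qed.

End Integ.
Section Leg.
Variable R : realFieldType.
Implicit Types p q f : {poly R}.

Lemma eq_via {T : Type} {x y x' y' : T} (H : x' = y') : x = x' -> y = y' -> x = y.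
Proof. by move=> -> ->. Qed.

Lemma dnat k p : (k%:R * p)^`() = k%:R * p^`().
Proof. by rewrite !mulr_natl derivMn. Qed.

Lemma dX2 : ('X^2 - 1 : {poly R})^`() = 2%:R * 'X.
Proof. by rewrite derivB derivXn derivC subr0 expr1 mulr_natl. Qed.

Definition W n : {poly R} := ('X^2 - 1) ^+ n.

Lemma W_deriv n : ('X^2 - 1) * (W n)^`() = (2 * n)%:R * ('X * W n).
Proof.
rewrite /W; case: n => [|k]; first by rewrite expr0 derivC mulr0 muln0 mul0r.
rewrite deriv_exp dX2 /= [in RHS]exprS -mulr_natr natrM; ring.
Qed.

Lemma Erel f n (Hf : ('X^2 - 1) * f^`() = (2 * n)%:R * ('X * f)) m :
  ('X^2-1) * f^`(m.+2) + (2 * m.+1)%:R * ('X * f^`(m.+1)) + (m.+1 * m)%:R * f^`(m)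
  = (2 * n)%:R * ('X * f^`(m.+1)) + (2 * n * m.+1)%:R * f^`(m).
Proof.
elim: m => [|m IH].
  have := congr1 deriv Hf; rewrite dnat !derivM dX2 derivX.
  rewrite derivn0 derivn1 derivnS derivn1 => E.
  rewrite !natrM in E *; apply: (eq_via E); ring.
have := congr1 deriv IH; rewrite !derivD !dnat !derivM dX2 derivX -!derivnS => E.
rewrite !natrM in E *. apply: (eq_via E); ring.
Qed.

Lemma eq_lin {S : comRingType} {x y x' y' : S} (k : S) (H : x' = y') :
  x - y = k * (x' - y') -> x = y.
Proof. by rewrite H subrr mulr0 => /eqP; rewrite subr_eq0 => /eqP. Qed.

Lemma eq_lin2 {S : comRingType} {x y x' y' x'' y'' : S} (k1 k2 : S)
  (H1 : x' = y') (H2 : x'' = y'') :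
  x - y = k1 * (x' - y') + k2 * (x'' - y'') -> x = y.
Proof. by rewrite H1 H2 !subrr !mulr0 addr0 => /eqP; rewrite subr_eq0 => /eqP. Qed.

Lemma dXp k p : ('X * p)^`(k.+1) = 'X * p^`(k.+1) + k.+1%:R * p^`(k).
Proof.
elim: k => [|k IH]; first by rewrite derivn1 derivn0 derivM derivX; ring.
rewrite derivnS IH derivD derivM dnat derivX -!derivnS; ring.
Qed.

Definition cc m : R := ((2 ^ m * m`!)%N%:R)^-1.

Lemma ccS m : cc m.+1 * (2 * m.+1)%:R = cc m.
Proof.
rewrite /cc.
have -> : (2 ^ m.+1 * m.+1`!)%N = ((2 * m.+1) * (2 ^ m * m`!))%N.
  by rewrite expnS factS; ring.
by rewrite natrM invfM mulrC mulrA mulfV ?mul1r // pnatr_eq0 muln_eq0.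
Qed.

Lemma legE m : legendre R m = cc m *: (W m)^`(m).
Proof. by []. Qed.

Lemma legS m : legendre R m.+1 = cc m *: ('X * W m)^`(m).
Proof.
rewrite legE derivSn.
have -> : (W m.+1)^`() = (2 * m.+1)%:R * ('X * W m).
  rewrite /W deriv_exp dX2 /= natrM; ring.
by rewrite mulr_natl derivnMn -scaler_nat scalerA ccS.
Qed.

Lemma legD m : (legendre R m)^`() = cc m *: (W m)^`(m.+1).
Proof. by rewrite legE derivZ derivnS. Qed.

Lemma legSD m : (legendre R m.+1)^`() =
  cc m *: ('X * (W m)^`(m.+1) + m.+1%:R * (W m)^`(m)).
Proof. by rewrite legS derivZ -derivnS dXp. Qed.

Lemma legR2 m : (legendre R m.+1)^`() - 'X * (legendre R m)^`()
   = m.+1%:R * legendre R m.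
Proof. rewrite legSD legD legE -!mul_polyC; ring. Qed.

Lemma legR1 m : 'X * (legendre R m.+1)^`() - (legendre R m)^`()
   = m.+1%:R * legendre R m.+1.
Proof.
case: m => [|k].
  have d1 : (1 : {poly R})^`() = 0 by rewrite -polyC1 derivC.
  rewrite legSD legD legS /W expr0 !derivn0 derivn1 d1 -!mul_polyC; ring.
rewrite legSD legD legS dXp.
have E := @Erel (W k.+1) k.+1 (W_deriv k.+1) k.
rewrite !natrM in E.
apply: (eq_lin (cc k.+1)%:P E); rewrite -!mul_polyC; ring.
Qed.

Lemma leg0 : legendre R 0 = 1.
Proof. by rewrite legE /W expr0 derivn0 /cc /= mul1n invr1 scale1r. Qed.

End Leg.

Lemma eq_lin6 {S : comRingType} {x y a1 b1 a2 b2 a3 b3 a4 b4 a5 b5 a6 b6 : S}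
  (k1 k2 k3 k4 k5 k6 : S) (H1 : a1 = b1) (H2 : a2 = b2) (H3 : a3 = b3)
  (H4 : a4 = b4) (H5 : a5 = b5) (H6 : a6 = b6) :
  x - y = k1*(a1-b1) + k2*(a2-b2) + k3*(a3-b3) + k4*(a4-b4) + k5*(a5-b5) + k6*(a6-b6)
  -> x = y.
Proof.
by rewrite H1 H2 H3 H4 H5 H6 !subrr !mulr0 !addr0 => /eqP; rewrite subr_eq0 => /eqP.
Qed.

Section Seq.
Variable R : realFieldType.
Variable P : nat -> {poly R}.
Hypothesis P0 : P 0 = 1.
Hypothesis R1 : forall m, 'X * (P m.+1)^`() - (P m)^`() = m.+1%:R * P m.+1.
Hypothesis R2 : forall m, (P m.+1)^`() - 'X * (P m)^`() = m.+1%:R * P m.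
Local Notation I := (poly_integral (-1) 1).
Implicit Types p q : {poly R}.

Lemma Bn n : ('X^2-1) * (P n)^`() = n.+1%:R * (P n.+1 - 'X * P n).
Proof. apply: (eq_lin2 1 (-'X) (R1 n) (R2 n)); ring. Qed.

Lemma L1 n : (('X^2-1) * (P n)^`())^`() = (n * n.+1)%:R * P n.
Proof.
rewrite Bn dnat derivB derivM derivX.
apply: (eq_lin n.+1%:R (R2 n)); rewrite natrM; ring.
Qed.

Lemma hX1 : ('X^2 - 1 : {poly R}).[1] = 0.
Proof. rewrite !hornerE; ring. Qed.
Lemma hXm1 : ('X^2 - 1 : {poly R}).[-1] = 0.
Proof. rewrite !hornerE; ring. Qed.

Lemma hornNat k (x : R) : (k%:R : {poly R}).[x] = k%:R.
Proof. by rewrite -polyC_natr hornerC. Qed.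

Lemma Pval1 n : (P n).[1] = 1.
Proof.
elim: n => [|n IH]; first by rewrite P0 hornerC.
have h1 := congr1 (fun p => p.[1]) (R1 n).
have h2 := congr1 (fun p => p.[1]) (R2 n).
rewrite /= !hornerE !hornNat IH in h1 h2.
apply: (mulfI (x := n.+1%:R)); first by rewrite pnatr_eq0.
apply: (eq_lin2 (-1) 1 h1 h2); ring.
Qed.

Lemma Pvalm1 n : (P n).[-1] = (-1)^+n.
Proof.
elim: n => [|n IH]; first by rewrite P0 hornerC expr0.
have h1 := congr1 (fun p => p.[-1]) (R1 n).
have h2 := congr1 (fun p => p.[-1]) (R2 n).
rewrite /= !hornerE !hornNat IH in h1 h2.
apply: (mulfI (x := n.+1%:R)); first by rewrite pnatr_eq0.
rewrite exprS.
apply: (eq_lin2 (-1) (-1) h1 h2); ring.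
Qed.

Lemma parts0 p q : I (p^`() * (('X^2-1) * q)) = - I (p * (('X^2-1) * q)^`()).
Proof. rewrite integ_parts !hornerM hX1 hXm1; ring. Qed.

Lemma Inat k p : I (k%:R * p) = k%:R * I p.
Proof. by rewrite mulr_natl -scaler_nat integZ. Qed.

Lemma SL n k : (n * n.+1)%:R * I (P k * P n) = - I ((P k)^`() * (('X^2-1) * (P n)^`())).
Proof.
rewrite parts0 opprK L1 -Inat; congr I; ring.
Qed.

Lemma Orth k n : k != n -> I (P k * P n) = 0.
Proof.
move=> kn.
have h1 := SL n k. have h2 := SL k n.
have e1 : P n * P k = P k * P n by ring.
have e2 : (P n)^`() * (('X^2-1) * (P k)^`()) = (P k)^`() * (('X^2-1) * (P n)^`()) by ring.
rewrite e1 e2 in h2.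
have : ((n * n.+1)%:R - (k * k.+1)%:R) * I (P k * P n) = 0.
  by rewrite mulrBl h1 h2 subrr.
move/eqP; rewrite mulf_eq0 subr_eq0 eqr_nat => /orP [|/eqP //].
move=> /eqP H; exfalso; move/negP: kn; apply.
apply/eqP; nia.
Qed.

Lemma XPP p : 2 * I ('X * p * p^`()) = (p.[1])^+2 + (p.[-1])^+2 - I (p * p).
Proof.
have H := @integ_parts R (-1) 1 p ('X * p).
rewrite derivM derivX mul1r mulrDr integD !hornerM !hornerX in H.
have e1 : p^`() * ('X * p) = 'X * p * p^`() by ring.
have e2 : p * ('X * p^`()) = 'X * p * p^`() by ring.
rewrite e1 e2 in H.
apply: (eq_lin 1 H); ring.
Qed.

Lemma sgnR n : (-1)^+n * (-1)^+n.+1 = -1 :> R.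
Proof. by rewrite exprS mulrCA -expr2 sqrr_sign mulr1. Qed.
Lemma sqR n : ((-1)^+n)^+2 = 1 :> R.
Proof. exact: sqrr_sign. Qed.

Lemma Norm n : I (P n * P n) = 2 / (2 * n + 1)%:R.
Proof.
elim: n => [|n IH]; first by rewrite P0 mulr1 integ1 muln0 add0n divr1.
set a := P n; set b := P n.+1.
have E1 : I ('X * b * b^`()) - I (b * a^`()) = n.+1%:R * I (b * b).
  have := congr1 (fun q => I (b * q)) (R1 n).
  have e : b * ('X * b^`() - a^`()) = 'X * b * b^`() - b * a^`() by ring.
  have e' : b * (n.+1%:R * b) = n.+1%:R * (b * b) by ring.
  by rewrite /= e e' integB Inat.
have E2 : I (a * b^`()) - I ('X * a * a^`()) = n.+1%:R * I (a * a).
  have := congr1 (fun q => I (a * q)) (R2 n).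
  have e : a * (b^`() - 'X * a^`()) = a * b^`() - 'X * a * a^`() by ring.
  have e' : a * (n.+1%:R * a) = n.+1%:R * (a * a) by ring.
  by rewrite /= e e' integB Inat.
have E3 : I (b * a^`()) = 1 * 1 - -1 - I (a * b^`()).
  rewrite mulrC integ_parts !hornerM !Pval1 !Pvalm1 sgnR //.
have E4 := XPP b. rewrite Pval1 Pvalm1 sqR in E4.
have E5 := XPP a. rewrite Pval1 Pvalm1 sqR in E5.
have E6 : (2 * n + 1)%:R * I (a * a) = 2.
  by rewrite IH mulrC divfK // pnatr_eq0 addn1.
have G : (2 * n.+1 + 1)%:R * I (b * b) = 2.
  apply: (eq_lin6 (-2) 2 (-2) 1 1 1 E1 E2 E3 E4 E5 E6).
  rewrite !natrD !natrM; ring.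
by rewrite -G mulrAC divff ?mul1r // pnatr_eq0 addn1.
Qed.

End Seq.

Section Main.
Variable R : realFieldType.
Local Notation P := (legendre R).
Local Notation I := (poly_integral (-1) 1).

Ltac legs := first [exact: leg0 | exact: legR1 | exact: legR2].

Lemma mL1 n : (('X^2-1) * (P n)^`())^`() = (n * n.+1)%:R * P n.
Proof. apply: (@L1 R P); legs. Qed.
Lemma mNorm n : I (P n * P n) = 2 / (2 * n + 1)%:R.
Proof. apply: (@Norm R P); legs. Qed.
Lemma mOrth k n : k != n -> I (P k * P n) = 0.
Proof. apply: (@Orth R P); legs. Qed.
Lemma mSL n k : (n * n.+1)%:R * I (P k * P n) = - I ((P k)^`() * (('X^2-1) * (P n)^`())).
Proof. apply: (@SL R P); legs. Qed.

Definition Y n := ('X^2 - 1) * (P n)^`()^`().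

Lemma mL1' n : Y n = (n * n.+1)%:R * P n - 2%:R * ('X * (P n)^`()).
Proof.
have H := mL1 n; rewrite derivM dX2 in H.
apply: (eq_lin 1 H); rewrite /Y; ring.
Qed.

Lemma mL2 m : (('X^2-1) * Y m.+2)^`() = (m.+1 * m.+4)%:R * (('X^2-1) * (P m.+2)^`()).
Proof.
have H := mL1' m.+2.
rewrite [in LHS]mL1' derivM dX2 derivB !dnat derivM derivX.
apply: (eq_lin (- 2%:R * 'X) H); rewrite /Y !natrM; ring.
Qed.

Lemma Tform m : legendre_tilde R m.+2 = ((m.+1 * m.+4)%:R)^-1 *: Y m.+2.
Proof.
set k : R := (m.+1 * m.+4)%:R.
have k0 : k != 0 by rewrite pnatr_eq0.
have hV := legR1 R m.+1.
have hY := mL1' m.+2.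
apply: (scalerI k0).
rewrite [RHS]scalerA mulfV // scale1r /legendre_tilde.
change (m.+2).-1 with m.+1.
set L2 := legendre R m.+2 in hV hY *; set L1 := legendre R m.+1 in hV *; set YY := Y m.+2 in hY *.
clearbody L2 L1 YY.
rewrite scalerA.
have -> : k * (m.+4%:R)^-1 = m.+1%:R.
  by rewrite /k natrM mulfK // pnatr_eq0.
rewrite scalerBr !scalerA.
have -> : m.+1%:R * (2 / m.+1%:R) = 2 :> R.
  by rewrite mulrC mulfVK // pnatr_eq0.
rewrite -!mul_polyC.
apply: (eq_lin2 2%:R (-1) hV hY).
rewrite !polyCM !polyC_natr !natrM; ring.
Qed.

Lemma hT m : (('X^2-1) * legendre_tilde R m.+2)^`() = ('X^2-1) * (P m.+2)^`().
Proof.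
rewrite Tform -scalerAr derivZ mL2 mulr_natl -scaler_nat scalerA mulVf ?scale1r //.
by rewrite pnatr_eq0.
Qed.

Lemma HY a m : I (Y a.+2 * Y m.+2)
   = (m.+1 * m.+4)%:R * ((m.+2 * m.+3)%:R * I (P a.+2 * P m.+2)).
Proof.
have -> : Y a.+2 * Y m.+2 = (P a.+2)^`()^`() * (('X^2-1) * Y m.+2).
  by rewrite [Y a.+2]/Y; ring.
rewrite parts0 mL2.
have -> : (P a.+2)^`() * ((m.+1 * m.+4)%:R * (('X^2 - 1) * (P m.+2)^`()))
  = (m.+1 * m.+4)%:R * ((P a.+2)^`() * (('X^2 - 1) * (P m.+2)^`())) by ring.
rewrite Inat mSL; ring.
Qed.

End Main.

Theorem mainTheorem4 (R : realFieldType) :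
  (forall n : nat, (2 <= n)%N ->
     (exists G : {poly R},
        ((1 - 'X^2) * G^`())^`() = ('X^2 - 1) * (legendre R n)^`()
        /\ legendre_tilde R n = - G^`())
     /\ (forall G : {poly R},
        ((1 - 'X^2) * G^`())^`() = ('X^2 - 1) * (legendre R n)^`() ->
        legendre_tilde R n = - G^`()))
  /\
  (forall k n : nat, (2 <= k)%N -> (2 <= n)%N ->
     poly_integral (-1) 1 (legendre_tilde R k * legendre_tilde R n)
     = if k == n then
         (2 * n * (n + 1))%N%:R / ((n - 1) * (n + 2) * (2 * n + 1))%N%:R
       else 0).
Proof.
split.
- case=> [|[|m]] // _.
  split.
  + exists (- poly_prim (legendre_tilde R m.+2)).
    rewrite derivN prim_deriv opprK; split => //.
    have -> : (1 - 'X^2) * - legendre_tilde R m.+2 = ('X^2 - 1) * legendre_tilde R m.+2 by ring.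
    exact: hT.
  + move=> G HG.
    have h0 : ((1 - 'X^2) * (G^`() + legendre_tilde R m.+2))^`() = 0.
      rewrite mulrDr derivD HG.
      have -> : (1 - 'X^2) * legendre_tilde R m.+2 = - (('X^2-1) * legendre_tilde R m.+2) by ring.
      by rewrite derivN hT subrr.
    have E := @deriv_eq0 R _ h0.
    have e1 : (1 - 'X^2 : {poly R}).[1] = 0 by rewrite !hornerE; ring.
    have e0 : (1 - 'X^2 : {poly R}).[0] = 1 by rewrite !hornerE; ring.
    have c0 := congr1 (fun p => p.[1]) E.
    rewrite /= hornerC hornerM e1 mul0r in c0.
    rewrite -c0 in E.
    move/eqP: E; rewrite mulf_eq0 => /orP [/eqP H|].
      by move: e0; rewrite H hornerC => /eqP; rewrite eq_sym oner_eq0.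
    by rewrite addrC addr_eq0 => /eqP.
- case=> [|[|a]] //; case=> [|[|m]] // _ _.
  rewrite !Tform -scalerAl -scalerAr !integZ HY /=.
  case: (eqVneq a m) => [->|ne].
    rewrite eqxx mNorm !natrD !natrM subn1 /=. field.
    have hm : 0 <= m%:R :> R := ler0n _ _.
    by apply/and3P; split; apply: lt0r_neq0; lra.
  by rewrite !eqSS (negbTE ne) mOrth ?mulr0 // !eqSS.
Qed.
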